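(* Let $n>1$, $m\ge1$ and let $v\in Z_{n,m}$ with $\operatorname{Piv}(v)=\{-1,m+1\}$. Then $\operatorname{ps}_{m+1}(v)=\sum_{i=0}^{m+1}i\,v_i$, $\operatorname{ps}_{-1}(v)=\sum_{i=0}^{m+1}(m+1-i)v_i$, and $d(v,0)\leq\lfloor\frac{n(m+1)}{2}\rfloor$.
   Context: Elements of $\mathbb{Z}_n$ are identified with representatives in $\{0,\dots,n-1\}$ (so $v_0,v_{m+1}$ are such integers in sums). $Z_{n,m}$ has vertices $u=(u_0,\dots,u_{m+1})\in\mathbb{Z}_n\times\{-1,0,1\}^m\times\mathbb{Z}_n$ with $\sum u_i\equiv0\pmod n$. A step from $v$ to $u$ is a left shift at $i$ ($0\le i\le m$) if $u_j=v_j$ for $j\notin\{i,i+1\}$, $u_i=v_i+1$, $u_{i+1}=v_{i+1}-1$, and a right shift at $i$ if $u_i=v_i-1$, $u_{i+1}=v_{i+1}+1$ (arithmetic in coordinates $0,m+1$ in $\mathbb{Z}_n$); vertices are adjacent iff related by such a shift. $d$ is graph distance, $0$ the all-zero vertex. $\operatorname{Piv}(v)$ is the set of integers $-1\le p\le m+1$ with $n\mid\sum_{i=0}^p v_i$ (empty sum $=0$). For a path $P$ from $v$ to $0$: $0\le p\le m$ is a wall if no step is a shift at $p$; $-1$ is a wall if no step is a left shift at $0$; $m+1$ is a wall if no step is a right shift at $m$. $\operatorname{ps}_p(v)$ is the minimum length of a path from $v$ to $0$ having $p$ as a wall. *)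

(* Defs.v *)
From mathcomp Require Import all_boot all_order all_algebra.
Set Implicit Arguments. Unset Strict Implicit. Unset Printing Implicit Defensive.
Import Order.TTheory GRing.Theory Num.Theory.
Local Open Scope ring_scope.

(* A vertex of Z_{n,m} is encoded as a sequence of m+2 integers
   (u_0,...,u_{m+1}); u_0 and u_{m+1} are the representatives in {0..n-1}
   of elements of Z_n, the middle entries lie in {-1,0,1}. *)
Definition zcoord (u : seq int) (i : nat) : int := nth 0 u i.

Definition is_vertex (n m : nat) (u : seq int) : bool :=
  [&& size u == m.+2,
      (0 <= zcoord u 0) && (zcoord u 0 < n%:Z),
      (0 <= zcoord u m.+1) && (zcoord u m.+1 < n%:Z),
      all (fun i => zcoord u i \in [:: -1; 0; 1]) (iota 1 m)
    & (n%:Z %| \sum_(i < m.+2) zcoord u i)%Z].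

Definition zerov (m : nat) : seq int := nseq m.+2 0.

Definition adj (n m j : nat) (x : int) : int :=
  if (j == 0%N) || (j == m.+1) then (x %% n%:Z)%Z else x.

(* the step from v to u is a shift at i in direction e (e = 1 : left,
   e = -1 : right): u_i = v_i + e, u_{i+1} = v_{i+1} - e, others equal;
   both endpoints must be vertices *)
Definition shift (n m : nat) (e : int) (i : nat) (v u : seq int) : bool :=
  [&& is_vertex n m v, is_vertex n m u, (i <= m)%N,
      zcoord u i == adj n m i (zcoord v i + e),
      zcoord u i.+1 == adj n m i.+1 (zcoord v i.+1 - e)
    & all (fun j => (j == i) || (j == i.+1) || (zcoord u j == zcoord v j))
          (iota 0 m.+2)].

Definition lshift n m i v u := shift n m 1 i v u.
Definition rshift n m i v u := shift n m (-1) i v u.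

Definition shift_at n m i v u := lshift n m i v u || rshift n m i v u.

Definition adjacent n m (v u : seq int) : bool :=
  has (fun i => shift_at n m i v u) (iota 0 m.+1).

(* a path from v to w: v :: s is the vertex sequence, its length is size s *)
Definition is_path n m (v w : seq int) (s : seq (seq int)) : bool :=
  is_vertex n m v && path (adjacent n m) v s && (last v s == w).

Definition steps (v : seq int) (s : seq (seq int)) := zip (v :: s) s.

Definition is_wall n m (p : int) (v : seq int) (s : seq (seq int)) : bool :=
  if p == -1 then all (fun st => ~~ lshift n m 0 st.1 st.2) (steps v s)
  else if p == (m.+1)%:Z then all (fun st => ~~ rshift n m m st.1 st.2) (steps v s)
  else (0 <= p <= m%:Z) &&
       all (fun st => ~~ shift_at n m (absz p) st.1 st.2) (steps v s).

Definition ps_is n m (p : int) (v : seq int) (k : int) : Prop :=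
  (exists s, [/\ is_path n m v (zerov m) s, is_wall n m p v s & (size s)%:Z = k])
  /\ (forall s, is_path n m v (zerov m) s -> is_wall n m p v s -> k <= (size s)%:Z).

Definition dist_is n m (v w : seq int) (d : nat) : Prop :=
  (exists s, is_path n m v w s /\ size s = d)
  /\ (forall s, is_path n m v w s -> (d <= size s)%N).

Definition piv n m (v : seq int) (p : int) : Prop :=
  (-1 <= p <= (m.+1)%:Z) /\ (n%:Z %| \sum_(i < (absz (p + 1))) zcoord v i)%Z.

(* Main.v *)
Require Import Defs.
From mathcomp Require Import all_boot all_order all_algebra.
From mathcomp Require Import zify ring lra.
From Stdlib Require Import Classical.
Import Order.TTheory GRing.Theory Num.Theory.
Local Open Scope ring_scope.

Lemma mem3 (x : int) : (x \in [:: -1; 0; 1]) = (-1 <= x <= 1).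
Proof.
rewrite !inE. apply/idP/idP; first by case/or3P => /eqP ->.
move=> h. have : x = -1 \/ x = 0 \/ x = 1 by lia. by case=> [->|[->|->]].
Qed.

Lemma dvd3 (n : nat) (x : int) : (n%:Z %| x)%Z -> x = 0 \/ n%:Z <= x \/ x <= - n%:Z.
Proof.
move=> /dvdzP [q ->]. case: (ltgtP q 0) => h.
- right;right. have h' : q <= -1 by lia. nia.
- right;left. have h' : 1 <= q by lia. nia.
- left. by rewrite h mul0r.
Qed.

Lemma zcoord_zero m j : zcoord (zerov m) j = 0.
Proof. by rewrite /zcoord /zerov nth_nseq; case: ifP. Qed.

Lemma adj_id n m j x : (0 < j)%N -> (j <= m)%N -> adj n m j x = x.
Proof. move=> h1 h2; rewrite /adj; case: ifP => // /orP [/eqP E|/eqP E]; lia. Qed.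

Lemma dvd_mod_sub (n : nat) (x : int) : (n%:Z %| (x %% n%:Z)%Z - x)%Z.
Proof.
rewrite {2}(divz_eq x n%:Z).
have -> : (x %% n%:Z)%Z - ((x %/ n%:Z)%Z * n%:Z + (x %% n%:Z)%Z) = - ((x %/ n%:Z)%Z * n%:Z) by ring.
by rewrite rpredN dvdz_mull // dvdzz.
Qed.

Lemma adj_dvd n m j x : (n%:Z %| adj n m j x - x)%Z.
Proof. rewrite /adj; case: ifP => _; [exact: dvd_mod_sub | by rewrite subrr dvdz0]. Qed.

Lemma adj_neq n m j x e : (1 < n)%N -> (e = 1 \/ e = -1) -> adj n m j (x + e) != x.
Proof.
move=> hn he; apply/eqP => E.
have := adj_dvd n m j (x + e). rewrite E.
have -> : x - (x + e) = - e by ring.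
rewrite rpredN => /dvd3. case: he => ->; lia.
Qed.

Lemma shiftP n m e i u u' : shift n m e i u u' ->
  [/\ is_vertex n m u, is_vertex n m u', (i <= m)%N,
      zcoord u' i = adj n m i (zcoord u i + e) /\
      zcoord u' i.+1 = adj n m i.+1 (zcoord u i.+1 - e)
    & forall j, (j < m.+2)%N -> j != i -> j != i.+1 -> zcoord u' j = zcoord u j].
Proof.
case/and5P => hu hu' hi /eqP h1 /andP [/eqP h2 /allP ha]; split => // j hj n1 n2.
have := ha j; rewrite mem_iota leq0n add0n hj => /(_ isT).
by rewrite (negbTE n1) (negbTE n2) => /eqP.
Qed.

Lemma vertexP n m u : is_vertex n m u ->
  [/\ size u = m.+2, 0 <= zcoord u 0 < n%:Z, 0 <= zcoord u m.+1 < n%:Z,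
      forall i, (0 < i <= m)%N -> -1 <= zcoord u i <= 1
    & (n%:Z %| \sum_(i < m.+2) zcoord u i)%Z].
Proof.
case/and5P => /eqP hs h0 h1 /allP ha hd; split => // i hi.
have := ha i; rewrite mem_iota add1n ltnS hi => /(_ isT).
by rewrite mem3.
Qed.

Definition mk n m (u : seq int) i (e : int) : seq int :=
  set_nth 0 (set_nth 0 u i (adj n m i (zcoord u i + e))) i.+1
    (adj n m i.+1 (zcoord u i.+1 - e)).

Lemma zcoord_mk n m u i e j : zcoord (mk n m u i e) j =
  if j == i.+1 then adj n m i.+1 (zcoord u i.+1 - e)
  else if j == i then adj n m i (zcoord u i + e) else zcoord u j.
Proof.
have nsn : forall (s : seq int) k y j, nth 0 (set_nth 0 s k y) j = if j == k then y else nth 0 s j.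
  by move=> s k y j'; rewrite nth_set_nth.
by rewrite /zcoord /mk !nsn.
Qed.

Lemma sum_two N i (f g : nat -> int) : (i.+1 < N)%N ->
  (forall j, j != i -> j != i.+1 -> f j = g j) ->
  \sum_(j < N) f j = \sum_(j < N) g j + (f i - g i) + (f i.+1 - g i.+1).
Proof.
move=> hN hfg.
suff H : forall N, \sum_(j < N) (f j - g j) =
   (if (i < N)%N then f i - g i else 0) + (if (i.+1 < N)%N then f i.+1 - g i.+1 else 0).
{ have := H N. rewrite sumrB hN ltnW // => E. rewrite -addrA -E. ring. }
elim => [|K IH]; first by rewrite big_ord0.
rewrite big_ord_recr /= IH.
case: (ltngtP i K) => h.
- have h1 : (i.+1 < K.+1)%N by lia.
  have h2 : (i < K.+1)%N by lia.
  rewrite ?h1 ?h2.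
  case: (ltngtP i.+1 K) => h3.
  + rewrite (hfg K) ?subrr ?addr0 //; apply/eqP; lia.
  + lia.
  + by rewrite h3 addr0.
- have h1 : (i.+1 < K.+1)%N = false by lia.
  have h2 : (i < K.+1)%N = false by lia.
  have h3 : (i < K)%N = false by lia.
  have h4 : (i.+1 < K)%N = false by lia.
  rewrite ?h1 ?h2 ?h3 ?h4 (hfg K); [ring | apply/eqP; lia | apply/eqP; lia].
- subst i. have h1 : (K.+1 < K.+1)%N = false by lia.
  have h2 : (K.+1 < K)%N = false by lia.
  have h3 : (K < K.+1)%N = true by lia.
  rewrite ?h1 ?h2 ?h3. ring.
Qed.

Lemma shift_mk n m e i u : (1 < n)%N -> is_vertex n m u -> (i <= m)%N ->
  ((0 < i)%N -> -1 <= zcoord u i + e <= 1) ->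
  ((i < m)%N -> -1 <= zcoord u i.+1 - e <= 1) ->
  shift n m e i u (mk n m u i e).
Proof.
move=> hn hu hi h1 h2. case/vertexP: (hu) => hs h0 hm1 hmid hd.
have hn0 : (0 < n%:Z) by lia.
have hn0' : (n%:Z != 0) by lia.
apply/and5P; split => //; last (apply/andP; split).
- apply/and5P; split.
  + rewrite /mk !size_set_nth hs; apply/eqP; lia.
  + rewrite zcoord_mk /=. case: eqP => [<-|_]; last by [].
    by rewrite /adj /= modz_ge0 // ltz_pmod.
  + rewrite zcoord_mk. case: eqP => [E|_].
    * have -> : i = m by lia. by rewrite /adj eqxx orbT modz_ge0 // ltz_pmod.
    * have -> : (m.+1 == i) = false by apply/eqP; lia. by [].
  + apply/allP => j; rewrite mem_iota => hj; rewrite zcoord_mk mem3.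
    case: eqP => [E|_].
    * rewrite adj_id; [apply: h2|lia|lia]; lia.
    * case: eqP => [E|_].
      -- rewrite adj_id; [apply: h1|lia|lia]; lia.
      -- apply: hmid; lia.
  + rewrite (@sum_two m.+2 i (zcoord (mk n m u i e)) (zcoord u)) //; last first.
    { by move=> j n1 n2; rewrite zcoord_mk (negbTE n1) (negbTE n2). }
    rewrite !zcoord_mk eqxx.
    have -> : (i == i.+1) = false by apply/eqP; lia.
    rewrite eqxx.
    set a := adj n m i _; set b := adj n m i.+1 _.
    have -> : \sum_(j < m.+2) zcoord u j + (a - zcoord u i) + (b - zcoord u i.+1) =
      \sum_(j < m.+2) zcoord u j + (a - (zcoord u i + e)) + (b - (zcoord u i.+1 - e)) by ring.
    by apply: rpredD; [apply: rpredD; [done | exact: adj_dvd] | exact: adj_dvd].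
- rewrite zcoord_mk. have -> : (i == i.+1) = false by apply/eqP; lia. by rewrite eqxx.
- by rewrite zcoord_mk eqxx.
- apply/allP => j _. rewrite zcoord_mk.
  case: (j =P i.+1) => [->|_].
  + have -> : (i.+1 == i) = false by apply/eqP; lia. by [].
  + case: (j =P i) => [->|_] //. by apply/orP; right; apply/eqP.
Qed.

Definition inv n m (u : seq int) (T : nat -> int) :=
  (n%:Z %| T 0%N - zcoord u 0)%Z /\ forall j, (0 < j <= m)%N -> zcoord u j = T j - T j.-1.

Definition upd (T : nat -> int) (i : nat) (e : int) : nat -> int :=
  fun p => if p == i then T p + e else T p.

Lemma inv_shift n m e i u u' T : (1 <= m)%N -> shift n m e i u u' -> inv n m u T ->
  inv n m u' (upd T i e).
Proof.
move=> hm /shiftP [hu hu' hi [h1 h2] ho] [hT0 hT]. split.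
- rewrite /upd. case: (eqVneq 0%N i) => [E|ne].
  + rewrite -E in h1 *. rewrite h1 /adj /=.
    have := dvd_mod_sub n (zcoord u 0 + e).
    set w := ((zcoord u 0 + e) %% n%:Z)%Z => hw.
    have -> : T 0%N + e - w = (T 0%N - zcoord u 0) - (w - (zcoord u 0 + e)) by ring.
    exact: rpredB.
  + rewrite ho //; apply/eqP; lia.
- move=> j hj. rewrite /upd.
  case: (eqVneq j i) => [E|nji].
  + subst j. have -> : (i.-1 == i) = false by apply/eqP; lia.
    rewrite h1 adj_id; [rewrite hT //; ring | lia | lia].
  + case: (eqVneq j i.+1) => [E|nj1].
    * subst j. rewrite -[i.+1.-1]/i eqxx.
      rewrite h2 adj_id; [rewrite hT //=; ring | lia | lia].
    * have -> : (j.-1 == i) = false by apply/eqP; lia.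
      rewrite ho //; [exact: hT | lia].
Qed.

Lemma sum_upd N (T : nat -> int) i e : (i < N)%N ->
  \sum_(p < N) upd T i e p = \sum_(p < N) T p + e.
Proof.
elim: N => // N IH hi. rewrite !big_ord_recr /=.
case: (ltngtP i N) => h.
- rewrite IH // /upd (gtn_eqF h). ring.
- lia.
- subst N. rewrite (eq_bigr (fun p : 'I_i => T p)); last first.
  { move=> p _. by rewrite /upd (ltn_eqF (ltn_ord p)). }
  rewrite /upd eqxx. ring.
Qed.

Lemma argmin N (T : nat -> int) : exists i, (i <= N)%N /\ forall j, (j <= N)%N -> T i <= T j.
Proof.
elim: N => [|N [i [hi hm]]].
  by exists 0%N; split => // j; rewrite leqn0 => /eqP ->.
case: (leP (T i) (T N.+1)) => h.
- exists i; split; first lia.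
  move=> j; rewrite leq_eqVlt ltnS; case/orP => [/eqP ->|/hm] //.
- exists N.+1; split => // j; rewrite leq_eqVlt ltnS; case/orP => [/eqP ->|/hm hj] //.
  exact: le_trans (ltW h) hj.
Qed.

Lemma argmax N (T : nat -> int) : exists i, (i <= N)%N /\ forall j, (j <= N)%N -> T j <= T i.
Proof.
have [i [hi hm]] := argmin N (fun p => - T p).
exists i; split => // j hj; have := hm j hj; rewrite lerN2 //.
Qed.

Lemma wall_r_nil n m u : is_wall n m (m.+1)%:Z u [::].
Proof. rewrite /is_wall /steps /=. by case: ifP => //; rewrite eqxx. Qed.

Lemma wall_l_nil n m u : is_wall n m (-1) u [::].
Proof. by rewrite /is_wall /steps /=. Qed.

Lemma wall_r_cons (n m : nat) (u u' : seq int) (s : seq (seq int)) : is_wall n m (m.+1)%:Z u (u' :: s) =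
  ~~ Defs.rshift n m m u u' && is_wall n m (m.+1)%:Z u' s.
Proof.
rewrite /is_wall. have -> : ((m.+1)%:Z == -1) = false by [].
by rewrite eqxx.
Qed.

Lemma wall_l_cons (n m : nat) (u u' : seq int) (s : seq (seq int)) : is_wall n m (-1) u (u' :: s) =
  ~~ Defs.lshift n m 0 u u' && is_wall n m (-1) u' s.
Proof. by rewrite /is_wall eqxx. Qed.

Lemma shift_uniq n m e e' i i' u u' : (1 < n)%N -> (1 <= m)%N ->
  (e = 1 \/ e = -1) -> (e' = 1 \/ e' = -1) ->
  shift n m e i u u' -> shift n m e' i' u u' -> i = i' /\ e = e'.
Proof.
move=> hn hm he he' /shiftP [_ _ hi [h1 h2] ho] /shiftP [_ _ hi' [h1' h2'] ho'].
have hii : i = i'.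
{ case: (ltngtP i i') => // h.
  - have := adj_neq n m i (zcoord u i) e hn he. rewrite -h1 ho' ?eqxx //; try lia; apply/eqP; lia.
  - have := adj_neq n m i' (zcoord u i') e' hn he'. rewrite -h1' ho ?eqxx //; try lia; apply/eqP; lia. }
subst i'; split => //.
case: (posnP i) => [E|hpos].
- subst i. move: h2 h2'. rewrite !adj_id //. move=> -> /eqP. lia.
- move: h1 h1'. rewrite !adj_id //. move=> -> /eqP. lia.
Qed.

Lemma zero_of n m u T c : (1 < n)%N -> is_vertex n m u -> inv n m u T ->
  (forall p, (p <= m)%N -> T p = c) -> (n%:Z %| c)%Z -> u = zerov m.
Proof.
move=> hn hu [hT0 hT] hc hdc. case/vertexP: hu => hs h0 hm1 hmid hd.
have hz : forall j, (j <= m)%N -> zcoord u j = 0.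
{ case => [|j] hj.
  - have : (n%:Z %| zcoord u 0)%Z.
    { have -> : zcoord u 0 = c - (T 0%N - zcoord u 0) by rewrite hc //; ring.
      exact: rpredB. }
    move/dvd3; lia.
  - rewrite hT // !hc //=; [ring | lia]. }
have hzm : zcoord u m.+1 = 0.
{ move: hd.
  have -> : \sum_(i < m.+2) zcoord u i = \sum_(i < m.+1) zcoord u i + zcoord u m.+1 by rewrite big_ord_recr.
  rewrite big1 ?add0r; last by move=> j _; apply: hz; rewrite -ltnS.
  move/dvd3; lia. }
apply: (@eq_from_nth _ 0); first by rewrite hs size_nseq.
move=> j; rewrite hs => hj.
rewrite -/(zcoord u j) -/(zcoord (zerov m) j) zcoord_zero.
case: (leqP j m) => h; first exact: hz.
have -> : j = m.+1 by lia. exact: hzm.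
Qed.

Lemma adjP n m u u' : adjacent n m u u' ->
  exists i, Defs.lshift n m i u u' \/ Defs.rshift n m i u u'.
Proof. by case/hasP => i _ /orP h; exists i. Qed.

Lemma const_of n m (T : nat -> int) : inv n m (zerov m) T ->
  (n%:Z %| T 0%N)%Z /\ forall p, (p <= m)%N -> T p = T 0%N.
Proof.
move=> [h0 hT]; split; first by move: h0; rewrite zcoord_zero subr0.
elim => // p IH hp. have := hT p.+1; rewrite zcoord_zero => /(_ hp).
rewrite -IH; [move=> /= E; lia | lia].
Qed.

Lemma sum_upd_sub N (T : nat -> int) i e (c : int) : (i < N)%N ->
  \sum_(p < N) (c - upd T i e p) = \sum_(p < N) (c - T p) - e.
Proof. move=> h; rewrite !sumrB sum_upd //; ring. Qed.

Arguments adjP {n m u u'}.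
Arguments inv_shift {n m e i u u' T}.
Arguments shift_uniq {n m e e' i i' u u'}.
Arguments zero_of {n m u T c}.
Arguments shift_mk {n m e i u}.

Lemma lb_r n m s : (1 < n)%N -> (1 <= m)%N -> forall u T,
  path (adjacent n m) u s -> last u s = zerov m -> is_wall n m (m.+1)%:Z u s ->
  inv n m u T -> 1 <= T m ->
  \sum_(p < m.+1) (n%:Z - T p) <= (size s)%:Z.
Proof.
move=> hn hm; elim: s => [|u' s IH] u T /=.
- move=> _ -> _ hI hTm.
  case/const_of: hI => hd hc.
  have hT0 : n%:Z <= T 0%N by move: hTm; rewrite hc // => h; case: (dvd3 n (T 0%N) hd) => [|[]]; lia.
  apply: (le_trans (y := \sum_(p < m.+1) (0:int))); last by rewrite big1.
  apply: ler_sum => p _; rewrite hc; [lia | by rewrite -ltnS].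
- move=> /andP [hadj hp] hl; rewrite wall_r_cons => /andP [hnr hw] hI hTm.
  have [i [hl'|hr']] := adjP hadj.
  + have hI' := inv_shift hm hl' hI.
    have hi : (i <= m)%N by case/shiftP: hl'.
    have hTm' : 1 <= upd T i 1 m by rewrite /upd; case: eqP => _; lia.
    have := IH _ _ hp hl hw hI' hTm'.
    rewrite sum_upd_sub //. set X := \sum_(p < m.+1) _. move=> h. lia.
  + have hI' := inv_shift hm hr' hI.
    have hi : (i <= m)%N by case/shiftP: hr'.
    have him : i != m by apply/eqP => E; subst i; rewrite hr' in hnr.
    have hTm' : 1 <= upd T i (-1) m by rewrite /upd eq_sym (negbTE him).
    have := IH _ _ hp hl hw hI' hTm'.
    rewrite sum_upd_sub //. set X := \sum_(p < m.+1) _. move=> h. lia.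
Qed.

Lemma lb_l n m s : (1 < n)%N -> (1 <= m)%N -> forall u T,
  path (adjacent n m) u s -> last u s = zerov m -> is_wall n m (-1) u s ->
  inv n m u T -> T 0%N <= n%:Z - 1 ->
  \sum_(p < m.+1) T p <= (size s)%:Z.
Proof.
move=> hn hm; elim: s => [|u' s IH] u T /=.
- move=> _ -> _ hI hT0.
  case/const_of: hI => hd hc.
  have hT0' : T 0%N <= 0 by case: (dvd3 n (T 0%N) hd) => [|[]]; lia.
  apply: (le_trans (y := \sum_(p < m.+1) (0:int))); last by rewrite big1.
  apply: ler_sum => p _; rewrite hc; [lia | by rewrite -ltnS].
- move=> /andP [hadj hp] hl; rewrite wall_l_cons => /andP [hnr hw] hI hT0.
  have [i [hl'|hr']] := adjP hadj.
  + have hI' := inv_shift hm hl' hI.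
    have hi : (i <= m)%N by case/shiftP: hl'.
    have him : i != 0%N by apply/eqP => E; subst i; rewrite hl' in hnr.
    have hT0' : upd T i 1 0%N <= n%:Z - 1 by rewrite /upd eq_sym (negbTE him).
    have := IH _ _ hp hl hw hI' hT0'.
    rewrite sum_upd //. set X := \sum_(p < m.+1) _. move=> h. lia.
  + have hI' := inv_shift hm hr' hI.
    have hi : (i <= m)%N by case/shiftP: hr'.
    have hT0' : upd T i (-1) 0%N <= n%:Z - 1 by rewrite /upd; case: eqP => _; lia.
    have := IH _ _ hp hl hw hI' hT0'.
    rewrite sum_upd //. set X := \sum_(p < m.+1) _. move=> h. lia.
Qed.

Lemma ub_r n m (k : nat) : (1 < n)%N -> (1 <= m)%N -> forall u T,
  is_vertex n m u -> inv n m u T -> (forall p, (p <= m)%N -> 1 <= T p <= n%:Z) ->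
  \sum_(p < m.+1) (n%:Z - T p) = k%:Z ->
  exists s, [/\ path (adjacent n m) u s, last u s = zerov m,
                is_wall n m (m.+1)%:Z u s & size s = k].
Proof.
move=> hn hm; elim: k => [|k IH] u T hu hI hb hs.
- exists [::]; split => //; last exact: wall_r_nil.
  have hc : forall p, (p <= m)%N -> T p = n%:Z.
  { move=> p hp. have hp' : (p < m.+1)%N by [].
    have H := @psumr_eq0P _ _ xpredT (fun q : 'I_m.+1 => n%:Z - T q).
    have hF : forall q : 'I_m.+1, xpredT q -> 0 <= n%:Z - T q.
    { move=> q _; have := hb q; rewrite -ltnS => /(_ (ltn_ord q)); lia. }
    have := H hF hs (Ordinal hp') isT.
    move=> /= E. lia. }
  exact: (zero_of hn hu hI hc (dvdzz _)).
- have [i [hi hmin]] := argmin m T.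
  have hlt : T i < n%:Z.
  { rewrite ltNge; apply/negP => hge.
    have : \sum_(p < m.+1) (n%:Z - T p) <= \sum_(p < m.+1) (0:int).
    { apply: ler_sum => p _. have := hmin p; rewrite -ltnS => /(_ (ltn_ord p)). lia. }
    rewrite big1_eq hs. lia. }
  have hsh : shift n m 1 i u (mk n m u i 1).
  { case: (hI) => _ hT. case/vertexP: (hu) => _ _ _ hmid _.
    apply: shift_mk => // [hi0|him].
    - have e1 := hmin i.-1 (leq_trans (leq_pred _) hi).
      have e2 : (0 < i <= m)%N by rewrite hi0 hi.
      have e3 := hmid i e2. rewrite (hT i e2) in e3 *. lia.
    - have e1 := hmin i.+1 him.
      have e2 : (0 < i.+1 <= m)%N by apply/andP; split.
      have e3 := hmid i.+1 e2. rewrite (hT i.+1 e2) /= in e3 *. lia. }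
  have hI' := inv_shift hm hsh hI.
  have hu' : is_vertex n m (mk n m u i 1) by case/shiftP: hsh.
  have hb' : forall p, (p <= m)%N -> 1 <= upd T i 1 p <= n%:Z.
  { move=> p hp; rewrite /upd; case: eqP => [->|_]; [have := hb i hi; lia | exact: hb]. }
  have hs' : \sum_(p < m.+1) (n%:Z - upd T i 1 p) = k%:Z.
  { rewrite sum_upd_sub // hs. lia. }
  have [s [h1 h2 h3 h4]] := IH _ _ hu' hI' hb' hs'.
  exists (mk n m u i 1 :: s); split => /=.
  + rewrite h1 andbT. apply/hasP; exists i; first by rewrite mem_iota; lia.
    by rewrite /shift_at /Defs.lshift hsh.
  + exact: h2.
  + rewrite wall_r_cons h3 andbT. apply/negP => hr.
    have [_ E] := shift_uniq hn hm (or_introl erefl) (or_intror erefl) hsh hr.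
    move: E; lia.
  + by rewrite h4.
Qed.

Lemma ub_l n m (k : nat) : (1 < n)%N -> (1 <= m)%N -> forall u T,
  is_vertex n m u -> inv n m u T -> (forall p, (p <= m)%N -> 0 <= T p <= n%:Z - 1) ->
  \sum_(p < m.+1) T p = k%:Z ->
  exists s, [/\ path (adjacent n m) u s, last u s = zerov m,
                is_wall n m (-1) u s & size s = k].
Proof.
move=> hn hm; elim: k => [|k IH] u T hu hI hb hs.
- exists [::]; split => //; try exact: wall_l_nil.
  have hc : forall p, (p <= m)%N -> T p = 0.
  { move=> p hp. have hp' : (p < m.+1)%N by [].
    have H := @psumr_eq0P _ _ xpredT (fun q : 'I_m.+1 => T q).
    have hF : forall q : 'I_m.+1, xpredT q -> 0 <= T q.
    { move=> q _; have := hb q; rewrite -ltnS => /(_ (ltn_ord q)); lia. }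
    have := H hF hs (Ordinal hp') isT.
    move=> /= E. lia. }
  exact: (zero_of hn hu hI hc (dvdz0 _)).
- have [i [hi hmax]] := argmax m T.
  have hlt : 0 < T i.
  { rewrite ltNge; apply/negP => hge.
    have : \sum_(p < m.+1) T p <= \sum_(p < m.+1) (0:int).
    { apply: ler_sum => p _. have := hmax p; rewrite -ltnS => /(_ (ltn_ord p)). lia. }
    rewrite big1_eq hs. lia. }
  have hsh : shift n m (-1) i u (mk n m u i (-1)).
  { case: (hI) => _ hT. case/vertexP: (hu) => _ _ _ hmid _.
    apply: shift_mk => // [hi0|him].
    - have e1 := hmax i.-1 (leq_trans (leq_pred _) hi).
      have e2 : (0 < i <= m)%N by rewrite hi0 hi.
      have e3 := hmid i e2. rewrite (hT i e2) in e3 *. lia.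
    - have e1 := hmax i.+1 him.
      have e2 : (0 < i.+1 <= m)%N by apply/andP; split.
      have e3 := hmid i.+1 e2. rewrite (hT i.+1 e2) /= in e3 *. lia. }
  have hI' := inv_shift hm hsh hI.
  have hu' : is_vertex n m (mk n m u i (-1)) by case/shiftP: hsh.
  have hb' : forall p, (p <= m)%N -> 0 <= upd T i (-1) p <= n%:Z - 1.
  { move=> p hp; rewrite /upd; case: eqP => [->|_]; [have := hb i hi; lia | exact: hb]. }
  have hs' : \sum_(p < m.+1) upd T i (-1) p = k%:Z.
  { rewrite sum_upd // hs. lia. }
  have [s [h1 h2 h3 h4]] := IH _ _ hu' hI' hb' hs'.
  exists (mk n m u i (-1) :: s); split => /=.
  + rewrite h1 andbT. apply/hasP; exists i; first by rewrite mem_iota; lia.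
    by rewrite /shift_at /Defs.rshift hsh orbT.
  + exact: h2.
  + rewrite wall_l_cons h3 andbT. apply/negP => hr.
    have [_ E] := shift_uniq hn hm (or_intror erefl) (or_introl erefl) hsh hr.
    move: E; lia.
  + by rewrite h4.
Qed.

Lemma id1 (f : nat -> int) k :
  \sum_(p < k) (\sum_(i < k.+1) f i - \sum_(i < p.+1) f i) = \sum_(i < k.+1) (i%:Z * f i).
Proof.
elim: k => [|k IH]; first by rewrite big_ord0 big_ord1 mul0r.
have E : forall p : 'I_k.+1, \sum_(i < k.+2) f i - \sum_(i < p.+1) f i =
   (\sum_(i < k.+1) f i - \sum_(i < p.+1) f i) + f k.+1.
{ move=> p; rewrite (big_ord_recr k.+1) /=. ring. }
rewrite (eq_bigr _ (fun p _ => E p)) big_split /= big_ord_recr /= subrr addr0 IH.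
rewrite sumr_const card_ord [in RHS](big_ord_recr k.+1) /=.
by rewrite -natz mulr_natl.
Qed.

Lemma id2 (f : nat -> int) k :
  \sum_(p < k) \sum_(i < p.+1) f i = \sum_(i < k) ((k%:Z - i%:Z) * f i).
Proof.
elim: k => [|k IH]; first by rewrite !big_ord0.
rewrite big_ord_recr /= IH [in RHS]big_ord_recr /= (big_ord_recr k) /=.
have -> : \sum_(i < k) (((k.+1)%:Z - i%:Z) * f i) =
   \sum_(i < k) ((k%:Z - i%:Z) * f i) + \sum_(i < k) f i.
{ rewrite -big_split /=; apply: eq_bigr => i _. rewrite intS; ring. }
rewrite intS. ring.
Qed.

Lemma min_exists (P : nat -> Prop) N : (exists k, (k <= N)%N /\ P k) ->
  exists d, [/\ P d, (forall k, P k -> (d <= k)%N) & (d <= N)%N].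
Proof.
elim: N => [|N IH] [k [hk pk]].
- exists k; split => //; try (move=> k' _); lia.
- case: (classic (exists k, (k <= N)%N /\ P k)) => [h|h].
  + have [d [pd hd dN]] := IH h. exists d; split => //; lia.
  + exists k; split => // k' pk'. case: (leqP k k') => // hlt.
    exfalso; apply: h; exists k'; split => //; lia.
Qed.

Definition psum (v : seq int) (p : nat) := \sum_(i < p.+1) zcoord v i.

Theorem lemma5p15 (n m : nat) (v : seq int) :
  (1 < n)%N -> (1 <= m)%N -> is_vertex n m v ->
  (forall p : int, piv n m v p <-> (p = -1 \/ p = (m.+1)%:Z)) ->
  [/\ ps_is n m (m.+1)%:Z v (\sum_(i < m.+2) (i%:Z * zcoord v i)),
      ps_is n m (-1) v (\sum_(i < m.+2) (((m.+1)%:Z - i%:Z) * zcoord v i))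
    & exists d, dist_is n m v (zerov m) d /\ (d <= (n * m.+1) %/ 2)%N].
Proof.
move=> hn hm hv H.
case/vertexP: (hv) => hs h0 hm1 hmid hd.
have hnd : forall p, (p <= m)%N -> ~ (n%:Z %| psum v p)%Z.
{ move=> p hp hdv. have : piv n m v p%:Z.
  { split; first lia.
    have -> : absz (p%:Z + 1) = p.+1 by rewrite addrC -intS.
    exact: hdv. }
  move/H => [] E; lia. }
have hSb : forall p, (p <= m)%N -> 1 <= psum v p <= n%:Z - 1.
{ elim => [|p IHp] hp.
  - have E0 : psum v 0 = zcoord v 0 by rewrite /psum big_ord1.
    have := hnd 0%N hp. rewrite E0. move: h0.
    case: (eqVneq (zcoord v 0) 0) => [->|ne]; first by rewrite dvdz0.
    move=> ? _; lia.
  - have E : psum v p.+1 = psum v p + zcoord v p.+1 by rewrite /psum big_ord_recr.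
    have e1 := IHp (ltnW hp).
    have e2 : (0 < p.+1 <= m)%N by apply/andP; split.
    have e3 := hmid _ e2.
    have nd := hnd p.+1 hp. rewrite E in nd *.
    have n1 : psum v p + zcoord v p.+1 <> 0 by move=> E'; apply: nd; rewrite E' dvdz0.
    have n2 : psum v p + zcoord v p.+1 <> n%:Z by move=> E'; apply: nd; rewrite E' dvdzz.
    lia. }
have hSn : psum v m.+1 = n%:Z.
{ have E : psum v m.+1 = psum v m + zcoord v m.+1 by rewrite /psum big_ord_recr.
  have := hSb m (leqnn m). have : (n%:Z %| psum v m.+1)%Z by exact: hd.
  move=> /dvdzP [q hq] hb. rewrite E in hq *.
  case: (ltgtP q 1) => hq1.
  - have : q <= 0 by lia. nia.
  - have : 2 <= q by lia. nia.
  - subst q. lia. }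
have hI : inv n m v (psum v).
{ split.
  - by rewrite /psum big_ord1 subrr dvdz0.
  - case => [|j] // hj.
    have -> : psum v j.+1 = psum v j + zcoord v j.+1 by rewrite /psum big_ord_recr.
    rewrite -[j.+1.-1]/j. ring. }
have hbr : forall p, (p <= m)%N -> 1 <= psum v p <= n%:Z by move=> p /hSb; lia.
have hk1 : 0 <= \sum_(p < m.+1) (n%:Z - psum v p).
{ apply: sumr_ge0 => p _; have := hSb p; rewrite -ltnS => /(_ (ltn_ord p)); lia. }
set k1 := absz (\sum_(p < m.+1) (n%:Z - psum v p)).
have hk1' : \sum_(p < m.+1) (n%:Z - psum v p) = k1%:Z by rewrite /k1 gez0_abs.
have [s1 [p1 l1 w1 z1]] := ub_r _ _ _ hn hm _ _ hv hI hbr hk1'.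
have hid1 : \sum_(i < m.+2) (i%:Z * zcoord v i) = \sum_(p < m.+1) (n%:Z - psum v p).
{ rewrite -(id1 (zcoord v) m.+1). apply: eq_bigr => p _. by rewrite -hSn. }
have hbl : forall p, (p <= m)%N -> 0 <= psum v p <= n%:Z - 1 by move=> p /hSb; lia.
have hk2 : 0 <= \sum_(p < m.+1) psum v p.
{ apply: sumr_ge0 => p _; have := hSb p; rewrite -ltnS => /(_ (ltn_ord p)); lia. }
set k2 := absz (\sum_(p < m.+1) psum v p).
have hk2' : \sum_(p < m.+1) psum v p = k2%:Z by rewrite /k2 gez0_abs.
have [s2 [p2 l2 w2 z2]] := ub_l _ _ _ hn hm _ _ hv hI hbl hk2'.
have hid2 : \sum_(i < m.+2) (((m.+1)%:Z - i%:Z) * zcoord v i) = \sum_(p < m.+1) psum v p.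
{ rewrite (id2 (zcoord v) m.+1).
  have -> : \sum_(i < m.+2) (((m.+1)%:Z - i%:Z) * zcoord v i) =
    \sum_(i < m.+1) (((m.+1)%:Z - i%:Z) * zcoord v i) + ((m.+1)%:Z - (m.+1)%:Z) * zcoord v m.+1
    by rewrite big_ord_recr.
  by rewrite subrr mul0r addr0. }
have hpath : forall s, path (adjacent n m) v s -> last v s = zerov m -> is_path n m v (zerov m) s.
{ by move=> s hp hl; rewrite /is_path hv hp hl eqxx. }
split.
- split.
  + exists s1; split; [exact: hpath | exact: w1 | by rewrite z1 hid1 hk1'].
  + move=> s /andP [/andP [_ hp] /eqP hl] hw. rewrite hid1.
    apply: (lb_r _ _ _ hn hm _ _ hp hl hw hI). by have := hSb m (leqnn m); lia.
- split.
  + exists s2; split; [exact: hpath | exact: w2 | by rewrite z2 hid2 hk2'].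
  + move=> s /andP [/andP [_ hp] /eqP hl] hw. rewrite hid2.
    apply: (lb_l _ _ _ hn hm _ _ hp hl hw hI). by have := hSb 0%N (leq0n m); lia.
- have hsum : (k1 + k2)%N = (n * m.+1)%N.
  { apply/eqP; rewrite -eqz_nat PoszD -hk1' -hk2' -big_split /=.
    rewrite (eq_bigr (fun _ => n%:Z)); last by move=> p _; rewrite subrK.
    by rewrite sumr_const card_ord -mulr_natr natz PoszM. }
  have [d [[s [hps hsz]] hmin hdN]] :=
    min_exists (fun d => exists s, is_path n m v (zerov m) s /\ size s = d) k1
      (ex_intro _ k1 (conj (leqnn k1) (ex_intro _ s1 (conj (hpath _ p1 l1) z1)))).
  have hd2 : (d <= k2)%N by apply: hmin; exists s2; split => //; exact: hpath.
  exists d; split.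
  + split; first by exists s.
    move=> s' hs'. apply: hmin. by exists s'.
  + lia.
Qed.
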